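(* For every LTL formula $\varphi$ in positive normal form, the cardinality of the set of partial derivative descendants $\Delta_{\Sigma^*}(\varphi)$ is bounded by $O(2^n)$, where $n$ is the size of $\varphi$.
   Context: Fix a finite set $AP$, a finite alphabet $\Sigma$ and $I:\Sigma\to\mathcal P(AP)$. LTL formulae in positive normal form: $\varphi,\psi ::= p \mid \neg p \mid \mathbf{tt} \mid \mathbf{ff} \mid \varphi\wedge\psi \mid \varphi\vee\psi \mid \mathbf{X}\varphi \mid \varphi\,\mathbf{U}\,\psi \mid \varphi\,\mathbf{R}\,\psi$; $\mathbf F\varphi=\mathbf{tt}\,\mathbf U\varphi$, $\mathbf G\varphi=\mathbf{ff}\,\mathbf R\varphi$. The size of a formula is the number of literals, temporal operators and Boolean operators in it. A temporal formula is one whose outermost operator is not $\wedge$ or $\vee$; conjunctions of temporal formulae are normalised modulo associativity, commutativity and idempotence w.r.t. a fixed total order ($\mathbf{tt}$ the empty conjunction). $\mathrm{SIMP}(\varphi\wedge\psi)=\{\varphi'\wedge\psi'\mid\varphi'\in\mathrm{SIMP}(\varphi),\psi'\in\mathrm{SIMP}(\psi)\}$, $\mathrm{SIMP}(\varphi\vee\psi)=\mathrm{SIMP}(\varphi)\cup\mathrm{SIMP}(\psi)$, $\mathrm{SIMP}(\varphi)=\{\varphi\}$ for temporal $\varphi$. For a literal $\ell$ ($p$ or $\neg p$): $x\models p$ iff $p\in I(x)$, $x\models\neg p$ iff $p\notin I(x)$. Direct partial derivative: $\Delta_x(\mathbf{tt})=\{\mathbf{tt}\}$; $\Delta_x(\mathbf{ff})=\emptyset$;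 $\Delta_x(\ell)=\{\mathbf{tt}\}$ if $x\models\ell$, else $\emptyset$; $\Delta_x(\varphi\vee\psi)=\Delta_x(\varphi)\cup\Delta_x(\psi)$; $\Delta_x(\varphi\wedge\psi)=\{\varphi'\wedge\psi'\mid\varphi'\in\Delta_x(\varphi),\psi'\in\Delta_x(\psi)\}$; $\Delta_x(\mathbf X\varphi)=\mathrm{SIMP}(\varphi)$; $\Delta_x(\varphi\mathbf U\psi)=\Delta_x(\psi)\cup\{\varphi'\wedge(\varphi\mathbf U\psi)\mid\varphi'\in\Delta_x(\varphi)\}$; $\Delta_x(\varphi\mathbf R\psi)=\{\varphi'\wedge\psi'\mid\varphi'\in\Delta_x(\varphi),\psi'\in\Delta_x(\psi)\}\cup\{\psi'\wedge(\varphi\mathbf R\psi)\mid\psi'\in\Delta_x(\psi)\}$; $\Delta_x(\mathbf F\varphi)=\Delta_x(\varphi)\cup\{\mathbf F\varphi\}$; $\Delta_x(\mathbf G\varphi)=\{\varphi'\wedge\mathbf G\varphi\mid\varphi'\in\Delta_x(\varphi)\}$. For words: $\Delta_\varepsilon(\varphi)=\{\varphi\}$, $\Delta_{xw}(\varphi)=\bigcup_{\varphi'\in\Delta_x(\varphi)}\Delta_w(\varphi')$, and $\Delta_{\Sigma^*}(\varphi)=\bigcup_{w\in\Sigma^*}\Delta_w(\varphi)$. *)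

(* Defs.v *)
From HB Require Import structures.
From mathcomp Require Import all_boot.
Set Implicit Arguments. Unset Strict Implicit. Unset Printing Implicit Defensive.

Section LTL.
Variable AP : finType.

(* LTL formulae in positive normal form.
   FLit true p = p,  FLit false p = ¬p.
   F φ := FU FTt φ,  G φ := FR FFf φ (derived, as in the paper). *)
Inductive form : Type :=
| FLit of bool & AP
| FTt
| FFf
| FAnd of form & form
| FOr of form & form
| FX of form
| FU of form & form
| FR of form & form.

Definition FF (f : form) := FU FTt f.
Definition FG (f : form) := FR FFf f.

(* countType structure (via a GenTree encoding); used only to get a
   fixed total order on formulae. *)
Fixpoint enc (f : form) : GenTree.tree (bool * AP) :=
  match f with
  | FLit b p => GenTree.Leaf (b, p)
  | FTt => GenTree.Node 0 [::]
  | FFf => GenTree.Node 1 [::]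
  | FAnd a b => GenTree.Node 2 [:: enc a; enc b]
  | FOr a b => GenTree.Node 3 [:: enc a; enc b]
  | FX a => GenTree.Node 4 [:: enc a]
  | FU a b => GenTree.Node 5 [:: enc a; enc b]
  | FR a b => GenTree.Node 6 [:: enc a; enc b]
  end.

Fixpoint dec (t : GenTree.tree (bool * AP)) : option form :=
  match t with
  | GenTree.Leaf (b, p) => Some (FLit b p)
  | GenTree.Node 0 [::] => Some FTt
  | GenTree.Node 1 [::] => Some FFf
  | GenTree.Node 2 [:: a; b] =>
      if (dec a, dec b) is (Some x, Some y) then Some (FAnd x y) else None
  | GenTree.Node 3 [:: a; b] =>
      if (dec a, dec b) is (Some x, Some y) then Some (FOr x y) else None
  | GenTree.Node 4 [:: a] => if dec a is Some x then Some (FX x) else None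
  | GenTree.Node 5 [:: a; b] =>
      if (dec a, dec b) is (Some x, Some y) then Some (FU x y) else None
  | GenTree.Node 6 [:: a; b] =>
      if (dec a, dec b) is (Some x, Some y) then Some (FR x y) else None
  | _ => None
  end.

Lemma encK : pcancel enc dec.
Proof. by elim => //= [a -> b ->|a -> b ->|a ->|a -> b ->|a -> b ->]. Qed.

HB.instance Definition _ := Countable.copy form (pcan_type encK).

Fixpoint fsize (f : form) : nat :=
  match f with
  | FLit _ _ => 1
  | FTt | FFf => 0
  | FAnd a b | FOr a b | FU a b | FR a b => (fsize a + fsize b).+1
  | FX a => (fsize a).+1
  end.

Definition fle (f g : form) : bool := pickle f <= pickle g.

Fixpoint conjuncts (f : form) : seq form :=
  match f with
  | FTt => [::]
  | FAnd a b => conjuncts a ++ conjuncts b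
  | _ => [:: f]
  end.

Fixpoint build (s : seq form) : form :=
  match s with
  | [::] => FTt
  | [:: a] => a
  | a :: s' => FAnd a (build s')
  end.

(* Conjunction normalised modulo associativity, commutativity and
   idempotence w.r.t. the fixed total order fle. *)
Definition mkAnd (f g : form) : form :=
  build (sort fle (undup (conjuncts f ++ conjuncts g))).

Fixpoint SIMP (f : form) : seq form :=
  match f with
  | FAnd a b => [seq mkAnd x y | x <- SIMP a, y <- SIMP b]
  | FOr a b => SIMP a ++ SIMP b
  | _ => [:: f]
  end.

Variable Sigma : finType.
Variable I : Sigma -> {set AP}.

(* Direct partial derivative Δ_x (as a finite list, read as a set). *)
Fixpoint deriv (x : Sigma) (f : form) : seq form :=
  match f with
  | FTt => [:: FTt]
  | FFf => [::]
  | FLit b p => if (p \in I x) == b then [:: FTt] else [::]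
  | FOr a b => deriv x a ++ deriv x b
  | FAnd a b => [seq mkAnd a' b' | a' <- deriv x a, b' <- deriv x b]
  | FX a => SIMP a
  | FU a b => deriv x b ++ [seq mkAnd a' (FU a b) | a' <- deriv x a]
  | FR a b => [seq mkAnd a' b' | a' <- deriv x a, b' <- deriv x b]
              ++ [seq mkAnd b' (FR a b) | b' <- deriv x b]
  end.

Fixpoint derivw (w : seq Sigma) (f : form) : seq form :=
  match w with
  | [::] => [:: f]
  | x :: w' => flatten [seq derivw w' g | g <- deriv x f]
  end.

Definition desc (f g : form) : Prop := exists w : seq Sigma, g \in derivw w f.

End LTL.

(* Main.v *)
Require Import Defs.
From HB Require Import structures.
From mathcomp Require Import all_boot.
From mathcomp Require Import zify.
From Stdlib Require Import ClassicalEpsilon.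

Section Proof.
Variables (AP Sigma : finType) (I : Sigma -> {set AP}).
Local Notation form := (form AP).

Definition atom (f : form) := match f with FAnd _ _ | FTt => false | _ => true end.

Lemma conj_atom (f : form) : atom f -> conjuncts f = [:: f].
Proof. by case: f. Qed.

Lemma conj_build (s : seq form) : all atom s -> conjuncts (build s) = s.
Proof.
elim: s => [|a [|b s] IH] //=.
- by rewrite andbT => /conj_atom.
- by case/andP => Ha Hs; rewrite conj_atom // IH.
Qed.

Lemma fle_total : total (@fle AP).
Proof. move=> a b; exact: leq_total. Qed.
Lemma fle_trans : transitive (@fle AP).
Proof. move=> b a c; exact: leq_trans. Qed.
Lemma fle_anti : antisymmetric (@fle AP).
Proof.
move=> a b /andP[h1 h2]; apply: (pcan_inj (@pickleK _)); apply/eqP; by rewrite eqn_leq; apply/andP; split.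
Qed.

Definition nf (l : seq form) := build (sort (@fle AP) (undup l)).

Lemma nf_eq l1 l2 : l1 =i l2 -> nf l1 = nf l2.
Proof.
move=> E; rewrite /nf; congr build.
apply/(perm_sortP fle_total fle_trans fle_anti).
apply: uniq_perm; rewrite ?undup_uniq // => x; by rewrite !mem_undup E.
Qed.

Definition Inv (K : seq form) g :=
  exists l, (forall a, a \in l -> atom a && (a \in K)) /\ g = nf l.

Lemma conj_nf l : (forall a, a \in l -> atom a) ->
  forall a, (a \in conjuncts (nf l)) = (a \in l).
Proof.
move=> H; rewrite /nf conj_build.
- by move=> x; rewrite mem_sort mem_undup.
- apply/allP => x; rewrite mem_sort mem_undup; exact: H.
Qed.

Lemma Inv_mkAnd K x y : Inv K x -> Inv K y -> Inv K (mkAnd x y).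
Proof.
move=> [l1 [H1 ->]] [l2 [H2 ->]]; exists (l1 ++ l2); split.
- move=> a; rewrite mem_cat => /orP[]; [exact: H1|exact: H2].
- change (nf (conjuncts (nf l1) ++ conjuncts (nf l2)) = nf (l1 ++ l2)).
  apply: nf_eq => a.
  rewrite !mem_cat conj_nf; last by move=> b /H1 /andP[].
  by rewrite conj_nf; last by move=> b /H2 /andP[].
Qed.

Lemma Inv_mono K K' g : {subset K <= K'} -> Inv K g -> Inv K' g.
Proof.
move=> S [l [H ->]]; exists l; split => // a /H /andP[-> /S ->] //.
Qed.

Lemma Inv_atom K a : atom a -> a \in K -> Inv K a.
Proof.
move=> Ha HK; exists [:: a]; split.
- by move=> b; rewrite inE => /eqP ->; rewrite Ha HK.
- by [].
Qed.

Lemma Inv_tt K : Inv K (FTt AP).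
Proof. by exists [::]. Qed.

Fixpoint TC (f : form) : seq form :=
  match f with
  | FAnd a b | FOr a b => TC a ++ TC b
  | FTt | FFf => [::]
  | _ => [:: f]
  end.

Fixpoint B (f : form) : seq form :=
  match f with
  | FLit _ _ | FTt | FFf => [::]
  | FAnd a b | FOr a b => B a ++ B b
  | FX a => TC a ++ B a
  | FU a b | FR a b => f :: B a ++ B b
  end.

Lemma SIMP_Inv a g : g \in SIMP a -> Inv ((FFf AP) :: TC a) g.
Proof.
elim: a g => [b p|||a IHa b IHb|a IHa b IHb|a IHa|a IHa b IHb|a IHa b IHb] g /=;
  try (rewrite inE => /eqP ->; apply: Inv_atom => //; by rewrite !inE eqxx ?orbT).
- by rewrite inE => /eqP ->; apply: Inv_tt.
- case/allpairsP => [[x y] [/= Hx Hy ->]]; apply: Inv_mkAnd.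
  + apply: Inv_mono (IHa _ Hx) => z; rewrite !inE mem_cat; case/orP=> ->; by rewrite ?orbT.
  + apply: Inv_mono (IHb _ Hy) => z; rewrite !inE mem_cat; case/orP=> ->; by rewrite ?orbT.
- rewrite mem_cat => /orP[Hx|Hy].
  + apply: Inv_mono (IHa _ Hx) => z; rewrite !inE mem_cat; case/orP=> ->; by rewrite ?orbT.
  + apply: Inv_mono (IHb _ Hy) => z; rewrite !inE mem_cat; case/orP=> ->; by rewrite ?orbT.
Qed.

Lemma deriv_Inv K x f g : (FFf AP) \in K -> {subset B f <= K} ->
  g \in deriv I x f -> Inv K g.
Proof.
move=> HF; elim: f g => [b p|||a IHa b IHb|a IHa b IHb|a IHa|a IHa b IHb|a IHa b IHb] g /= HB.
- by case: ifP => _; rewrite ?inE // => /eqP ->; apply: Inv_tt.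
- by rewrite inE => /eqP ->; apply: Inv_tt.
- by [].
- case/allpairsP => [[y z] [/= Hy Hz ->]]; apply: Inv_mkAnd.
  + by apply: IHa Hy => t Ht; apply: HB; rewrite mem_cat Ht.
  + by apply: IHb Hz => t Ht; apply: HB; rewrite mem_cat Ht orbT.
- rewrite mem_cat => /orP[Hy|Hz].
  + by apply: IHa Hy => t Ht; apply: HB; rewrite mem_cat Ht.
  + by apply: IHb Hz => t Ht; apply: HB; rewrite mem_cat Ht orbT.
- move=> Hg; apply: Inv_mono (SIMP_Inv _ _ Hg) => z; rewrite inE => /orP[/eqP -> //|Hz].
  by apply: HB; rewrite mem_cat Hz.
- rewrite mem_cat => /orP[Hz|/mapP[y Hy ->]].
  + by apply: IHb Hz => t Ht; apply: HB; rewrite inE mem_cat Ht !orbT.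
  + apply: Inv_mkAnd.
    * by apply: IHa Hy => t Ht; apply: HB; rewrite inE mem_cat Ht !orbT.
    * by apply: Inv_atom => //; apply: HB; rewrite mem_head.
- rewrite mem_cat => /orP[/allpairsP[[y z] [/= Hy Hz ->]]|/mapP[z Hz ->]].
  + apply: Inv_mkAnd.
    * by apply: IHa Hy => t Ht; apply: HB; rewrite inE mem_cat Ht !orbT.
    * by apply: IHb Hz => t Ht; apply: HB; rewrite inE mem_cat Ht !orbT.
  + apply: Inv_mkAnd.
    * by apply: IHb Hz => t Ht; apply: HB; rewrite inE mem_cat Ht !orbT.
    * by apply: Inv_atom => //; apply: HB; rewrite mem_head.
Qed.

Lemma TC_B a t : t \in TC a -> {subset B t <= B a}.
Proof.
elim: a => [b p|||a IHa b IHb|a IHa b IHb|a IHa|a IHa b IHb|a IHa b IHb] /=;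
  try (by rewrite inE => /eqP ->); try by [].
- rewrite mem_cat => /orP[/IHa H|/IHb H] z /H Hz; by rewrite mem_cat Hz ?orbT.
- rewrite mem_cat => /orP[/IHa H|/IHb H] z /H Hz; by rewrite mem_cat Hz ?orbT.
Qed.

Lemma B_closed f t : t \in B f -> {subset B t <= B f}.
Proof.
elim: f => [b p|||a IHa b IHb|a IHa b IHb|a IHa|a IHa b IHb|a IHa b IHb] //=.
- rewrite mem_cat => /orP[/IHa H|/IHb H] z /H Hz; by rewrite mem_cat Hz ?orbT.
- rewrite mem_cat => /orP[/IHa H|/IHb H] z /H Hz; by rewrite mem_cat Hz ?orbT.
- rewrite mem_cat => /orP[/TC_B H|/IHa H] z /H Hz; by rewrite mem_cat Hz ?orbT.
- rewrite inE mem_cat => /orP[/eqP ->//|/orP[/IHa H|/IHb H]] z /H Hz;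
    by rewrite inE mem_cat Hz ?orbT.
- rewrite inE mem_cat => /orP[/eqP ->//|/orP[/IHa H|/IHb H]] z /H Hz;
    by rewrite inE mem_cat Hz ?orbT.
Qed.

Lemma build_Inv K x (s : seq form) : (FFf AP) \in K ->
  (forall a, a \in s -> atom a && (a \in K)) ->
  (forall a, a \in K -> {subset B a <= K}) ->
  forall g, g \in deriv I x (build s) -> Inv K g.
Proof.
move=> HF; elim: s => [|a [|b s] IH] Hs HK g /=.
- by rewrite inE => /eqP ->; apply: Inv_tt.
- apply: deriv_Inv => //; apply: HK.
  by have /andP[] := Hs a (mem_head _ _).
- case/allpairsP => [[y z] [/= Hy Hz ->]]; apply: Inv_mkAnd.
  + apply: deriv_Inv Hy => //; apply: HK.
    by have /andP[] := Hs a (mem_head _ _).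
  + apply: IH Hz => // t Ht; apply: Hs; by rewrite inE Ht orbT.
Qed.

Lemma Inv_step K x h g : (FFf AP) \in K -> (forall a, a \in K -> {subset B a <= K}) ->
  Inv K h -> g \in deriv I x h -> Inv K g.
Proof.
move=> HF HK [l [Hl ->]]; apply: build_Inv => // a.
rewrite mem_sort mem_undup; exact: Hl.
Qed.

Lemma derivw_Inv K w h g : (FFf AP) \in K -> (forall a, a \in K -> {subset B a <= K}) ->
  Inv K h -> g \in derivw I w h -> Inv K g.
Proof.
move=> HF HK; elim: w h => [|x w IH] h Hh /=.
- by rewrite inE => /eqP ->.
- case/flattenP => gs /mapP[h' Hh' ->] Hg; apply: IH Hg.
  exact: (Inv_step _ _ _ _ HF HK Hh Hh').
Qed.

Fixpoint subs (T : Type) (s : seq T) : seq (seq T) :=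
  if s is x :: s' then [seq x :: t | t <- subs T s'] ++ subs T s' else [:: [::]].

Lemma size_subs T (s : seq T) : size (subs T s) = 2 ^ size s.
Proof. elim: s => //= x s IH; rewrite size_cat size_map IH expnS; lia. Qed.

Lemma filter_subs (T : eqType) (p : pred T) (s : seq T) : filter p s \in subs T s.
Proof.
elim: s => [|x s IH] /=; first by rewrite inE.
rewrite mem_cat; case: (p x); first by rewrite map_f.
by rewrite IH orbT.
Qed.

Lemma Inv_in K g : Inv K g -> g \in [seq nf m | m <- subs _ K].
Proof.
move=> [l [Hl ->]].
have -> : nf l = nf (filter (mem l) K).
  apply: nf_eq => a; rewrite mem_filter /=.
  case Ha: (a \in l) => //=; by have /andP[_ ->] := Hl a Ha.
by apply: map_f; apply: filter_subs.
Qed.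

Lemma size_B f : size (B f) <= fsize f /\ size (B f) + size (TC f) <= (fsize f).+1.
Proof.
elim: f => [b p|||a [IHa1 IHa2] b [IHb1 IHb2]|a [IHa1 IHa2] b [IHb1 IHb2]|a [IHa1 IHa2]
  |a [IHa1 IHa2] b [IHb1 IHb2]|a [IHa1 IHa2] b [IHb1 IHb2]] /=;
  rewrite ?size_cat /=; lia.
Qed.

Lemma K_closed f : forall a, a \in (FFf AP) :: B f -> {subset B a <= (FFf AP) :: B f}.
Proof.
move=> a; rewrite inE => /orP[/eqP -> //|/B_closed H] z /H Hz.
by rewrite inE Hz orbT.
Qed.

End Proof.

Theorem lemma10 (AP Sigma : finType) (I : Sigma -> {set AP}) :
  exists C : nat, forall phi : form AP,
    exists s : seq (form AP),
      [/\ uniq s,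
          (forall psi : form AP, desc I phi psi <-> psi \in s)
        & size s <= C * 2 ^ fsize phi].
Proof.
exists 3 => phi.
pose K := (FFf AP) :: B _ phi.
pose L := phi :: [seq nf _ m | m <- subs _ K].
pose P := fun g => if excluded_middle_informative (desc I phi g) then true else false.
have HP g : P g = true <-> desc I phi g.
  rewrite /P; case: excluded_middle_informative => //.
have HL g : desc I phi g -> g \in L.
  case=> [[|x w]] /=; first by rewrite inE => /eqP ->; rewrite mem_head.
  case/flattenP => gs /mapP[h Hh ->] Hg.
  have HI : Inv _ K g.
    apply: (derivw_Inv _ _ I K w h g _ (@K_closed _ phi) _ Hg); first by rewrite mem_head.
    apply: (deriv_Inv _ _ I K x phi h _ _ Hh); first by rewrite mem_head.
    by move=> z Hz; rewrite inE Hz orbT.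
  by rewrite inE (Inv_in _ _ _ HI) ?orbT.
exists (undup (filter P L)); split.
- exact: undup_uniq.
- move=> psi; rewrite mem_undup mem_filter; split.
  + by move=> H; rewrite (proj2 (HP psi) H) HL.
  + by case/andP => /HP.
- apply: leq_trans (size_undup _) _.
  rewrite size_filter; apply: leq_trans (count_size _ _) _.
  rewrite /L /= size_map. idtac.
  have [H1 _] := size_B _ phi.
  have H2 : 2 ^ size (B _ phi) <= 2 ^ fsize phi by apply: leq_pexp2l.
  have H3 : 0 < 2 ^ fsize phi by rewrite expn_gt0.
  rewrite size_cat size_map size_subs.
  move: H2 H3; set u := 2 ^ size _; set v := 2 ^ fsize phi => H2 H3.
  rewrite mulSn mul2n -addnn; apply: (leq_ltn_trans (leq_add H2 H2)).
  by rewrite ltn_add2l -{1}[v]addn0 ltn_add2l.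
Qed.
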